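(* Let $m\ge 3$ and let $K\ne\Delta_{[m]}$ be a simplicial complex on $[m]$. If $\mathrm{Bier}(K)$ is a weak suspension but not a suspension, then $\chi(\mathrm{Bier}(K))=m$.
   Context: A simplicial complex $K$ on $[m]=\{1,\dots,m\}$ is a nonempty family of subsets of $[m]$ closed under taking subsets; $V(K)=\{i:\{i\}\in K\}$. $\Delta_{[m]}=2^{[m]}$. Let $[m']=\{1',\dots,m'\}$ be a disjoint copy of $[m]$, $I'=\{i':i\in I\}$. For $K\ne\Delta_{[m]}$ the Alexander dual $K^\vee$ is the complex on $[m']$ with $J'\in K^\vee$ iff $[m]\setminus J\notin K$. The Bier sphere $\mathrm{Bier}(K)$ is the complex on $[m]\sqcup[m']$ with faces $I\sqcup J'$, $I\in K$, $J'\in K^\vee$, $I\cap J=\varnothing$. The chromatic number $\chi(L)$ is the least number of colors in a map $c\colon V(L)\to C$ with $c(u)\ne c(v)$ whenever $\{u,v\}\in L$. A complex $L$ is a weak suspension if there exist distinct $a,b\in V(L)$ with $\{a,b\}\notin L$ such that each of $a,b$ forms an edge of $L$ with every vertex of $V(L)\setminus\{a,b\}$. $L$ (on vertex set $W$) is a suspension if there exist distinct $v,w\in W$ with $L=\{\varnothing,\{v\},\{w\}\}*\bigl(L\cap 2^{W\setminus\{v,w\}}\bigr)$, where $*$ denotes the join $K_1*K_2=\{\sigma_1\sqcup\sigma_2:\sigma_j\in K_j\}$. *)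

(* Defs.v *)
From mathcomp Require Import all_boot.
Set Implicit Arguments. Unset Strict Implicit. Unset Printing Implicit Defensive.

Definition simplicial_complex (T : finType) (K : {set {set T}}) : Prop :=
  K != set0 /\ forall A B : {set T}, A \in K -> B \subset A -> B \in K.

Definition full_simplex (T : finType) : {set {set T}} := powerset [set: T].

Definition vertices (T : finType) (L : {set {set T}}) : {set T} :=
  [set x | [set x] \in L].

(* Alexander dual on the primed copy [m'] (modelled again by 'I_m):
   J' \in K^vee iff [m] \ J \notin K. *)
Definition alexander_dual (m : nat) (K : {set {set 'I_m}}) : {set {set 'I_m}} :=
  [set J : {set 'I_m} | ~: J \notin K].

(* Bier sphere on [m] \sqcup [m'] = 'I_m + 'I_m (inl i = i, inr i = i'):
   faces I \sqcup J' with I \in K, J' \in K^vee, I \cap J = \emptyset. *)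
Definition bier (m : nat) (K : {set {set 'I_m}}) : {set {set ('I_m + 'I_m)%type}} :=
  [set S : {set ('I_m + 'I_m)%type} |
     [&& [set i | inl i \in S] \in K,
         [set j | inr j \in S] \in alexander_dual K &
         [disjoint [set i | inl i \in S] & [set j | inr j \in S]]]].

Definition proper_coloring (T : finType) (L : {set {set T}}) (k : nat)
    (c : T -> nat) : Prop :=
  (forall x, x \in vertices L -> c x < k) /\
  (forall u v, u != v -> [set u; v] \in L -> c u != c v).

Definition colorable (T : finType) (L : {set {set T}}) (k : nat) : Prop :=
  exists c : T -> nat, proper_coloring L k c.

Definition chromatic_number_is (T : finType) (L : {set {set T}}) (k : nat) : Prop :=
  colorable L k /\ forall j, colorable L j -> k <= j.

Definition weak_suspension (T : finType) (L : {set {set T}}) : Prop :=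
  exists a b : T, [/\ a \in vertices L, b \in vertices L, a != b,
    [set a; b] \notin L &
    forall v, v \in vertices L -> v != a -> v != b ->
      [set a; v] \in L /\ [set b; v] \in L].

(* L = {emptyset,{v},{w}} * (L \cap 2^{W \ {v,w}}) (the join). *)
Definition suspension (T : finType) (L : {set {set T}}) : Prop :=
  exists v w : T, v != w /\
    forall S : {set T}, S \in L <->
      exists2 A : {set T}, (A \in L /\ v \notin A /\ w \notin A) &
        (S = A \/ S = v |: A \/ S = w |: A).

(* Main.v *)
Require Import Defs.
From mathcomp Require Import all_boot zify.
Set Implicit Arguments. Unset Strict Implicit.

Section B.
Variable m : nat.
Notation T := ('I_m + 'I_m)%type.
Definition lp (S : {set T}) : {set 'I_m} := [set i | inl i \in S].
Definition rp (S : {set T}) : {set 'I_m} := [set i | inr i \in S].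

Lemma in_bier (K : {set {set 'I_m}}) S : (S \in bier K) =
  [&& lp S \in K, ~: rp S \notin K & [disjoint lp S & rp S]].
Proof. by rewrite /bier inE /alexander_dual inE. Qed.

Lemma card_lr (S : {set T}) : #|S| = #|lp S| + #|rp S|.
Proof.
have E : S = inl @: lp S :|: inr @: rp S.
  apply/setP => -[i|i]; rewrite !inE.
  - apply/idP/idP => [H|/orP[/imsetP[x]|/imsetP[x]]].
    + by apply/orP; left; apply/imsetP; exists i; rewrite ?inE.
    + by rewrite inE => Hx [->].
    + by [].
  - apply/idP/idP => [H|/orP[/imsetP[x]|/imsetP[x]]].
    + by apply/orP; right; apply/imsetP; exists i; rewrite ?inE.
    + by [].
    + by rewrite inE => Hx [->].
rewrite {1}E.
have il : injective (@inl 'I_m 'I_m) by move=> x y [].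
have ir : injective (@inr 'I_m 'I_m) by move=> x y [].
rewrite cardsU (card_imset _ il) (card_imset _ ir).
have -> : inl @: lp S :&: inr @: rp S = set0.
  apply/setP => x; rewrite !inE; apply/negP => /andP[/imsetP[u _ ->] /imsetP[v _]] //.
by rewrite cards0 subn0.
Qed.

Lemma ph (U : finType) (S : {set U}) (f : U -> nat) n k :
  (forall x, x \in S -> f x < n) -> {in S &, injective f} -> k < n ->
  (forall x, x \in S -> f x != k) -> #|S| < n.
Proof.
move=> Hlt Hinj Hk Hne.
have Hs : #|S| <= size (rem k (iota 0 n)).
  rewrite cardE -(size_map f); apply: uniq_leq_size.
    rewrite map_inj_in_uniq ?enum_uniq //.
    by move=> x y; rewrite !mem_enum; apply: Hinj.
  move=> y /mapP[x]; rewrite mem_enum => Hx ->.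
  rewrite (mem_rem_uniq _ (iota_uniq 0 n)) !inE Hne //= mem_iota add0n Hlt //.
move: Hs; rewrite size_rem ?size_iota ?mem_iota //; lia.
Qed.
End B.

Section B2.
Variable m : nat.
Notation T := ('I_m + 'I_m)%type.
Variable K : {set {set 'I_m}}.
Hypothesis HK : simplicial_complex K.

Definition mk (I J : {set 'I_m}) : {set T} := inl @: I :|: inr @: J.
Lemma lp_mk I J : lp (mk I J) = I.
Proof.
apply/setP => i; rewrite !inE; apply/idP/idP => [/orP[/imsetP[x Hx [->]]|/imsetP[x _ //]] //|H].
by apply/orP; left; apply/imsetP; exists i.
Qed.
Lemma rp_mk I J : rp (mk I J) = J.
Proof.
apply/setP => i; rewrite !inE; apply/idP/idP => [/orP[/imsetP[x _ //]|/imsetP[x Hx [->]]] //|H].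
by apply/orP; right; apply/imsetP; exists i.
Qed.
Lemma mem_mk I J x : (x \in mk I J) = (match x with inl i => i \in I | inr j => j \in J end).
Proof.
case: x => i.
- by move/setP: (lp_mk I J) => /(_ i); rewrite inE.
- by move/setP: (rp_mk I J) => /(_ i); rewrite inE.
Qed.

Lemma bier_sub (S S' : {set T}) : S \in bier K -> S' \subset S -> S' \in bier K.
Proof.
case: HK => _ Hc.
rewrite !in_bier => /and3P[H1 H2 H3] Hs.
have Hl : lp S' \subset lp S by apply/subsetP => i; rewrite !inE => /(subsetP Hs).
have Hr : rp S' \subset rp S by apply/subsetP => i; rewrite !inE => /(subsetP Hs).
apply/and3P; split.
- exact: Hc H1 Hl.
- apply/negP => H; move/negP: H2; apply; apply: Hc H _.
  by rewrite setCS.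
- exact: disjointWl Hl (disjointWr Hr H3).
Qed.

Lemma ext_face (U : {set 'I_m}) : U \notin K -> forall n I, #|U :\: I| = n -> I \in K -> I \subset U ->
  exists (I' : {set 'I_m}) (x : 'I_m), [/\ I \subset I', I' \subset U, I' \in K, x \in U :\: I' & x |: I' \notin K].
Proof.
move=> HU; elim=> [|n IH] I Hn HI HIU.
  have : U \subset I by rewrite -setD_eq0 -cards_eq0 Hn.
  move=> HUI; have E : I = U by apply/eqP; rewrite eqEsubset HIU HUI.
  by rewrite -E HI in HU.
have : exists x, x \in U :\: I by apply/set0Pn; rewrite -cards_eq0 Hn.
case=> x; rewrite inE => /andP[HxI HxU].
case HxK: (x |: I \in K).
- have Hn' : #|U :\: (x |: I)| = n.
    move: Hn; rewrite (cardsD1 x) !inE HxI HxU /= => -[<-].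
    by rewrite setDDl setUC.
  have [I' [y [H1 H2 H3 H4 H6]]] := IH (x |: I) Hn'
    HxK ltac:(by rewrite subUset sub1set HxU HIU).
  exists I', y; split => //; apply: subset_trans H1; exact: subsetUr.
- by exists I, x; split; rewrite ?HxK ?inE ?HxI ?HxU.
Qed.

Lemma purity (S : {set T}) : S \in bier K ->
  exists F : {set T}, [/\ S \subset F, F \in bier K & #|F|.+1 = m].
Proof.
move=> HS; move: (HS); rewrite in_bier => /and3P[H1 H2 H3].
have HIU : lp S \subset ~: rp S by rewrite -disjoints_subset.
have [I' [x [Hs1 Hs2 Hs3 /setDP[Hx1 Hx2] Hx3]]] := ext_face H2 (erefl _) H1 HIU.
exists (mk I' (~: (x |: I'))); split.
- apply/subsetP => -[i|i] Hi; rewrite mem_mk.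
  + by apply: (subsetP Hs1); rewrite inE.
  + have Hr : i \in rp S by rewrite inE.
    rewrite !inE negb_or; apply/andP; split.
    * by apply/eqP => E; move: Hx1; rewrite inE -E Hr.
    * by apply/negP => /(subsetP Hs2); rewrite inE Hr.
- rewrite in_bier lp_mk rp_mk setCK Hs3 Hx3 /= disjoints_subset setCK.
  exact: subsetUr.
- rewrite card_lr lp_mk rp_mk.
  have := cardsC (x |: I'); rewrite cardsU1 Hx2 card_ord.
  move=> E; rewrite -[in RHS]E; by rewrite -addnA.
Qed.

Lemma djP (U : finType) (A B : {set U}) :
  reflect (forall x, x \in A -> x \in B -> False) [disjoint A & B].
Proof.
rewrite disjoints_subset; apply: (iffP subsetP) => H x Ha.
- by move=> Hb; move: (H x Ha); rewrite inE Hb.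
- by rewrite inE; apply/negP; exact: H x Ha.
Qed.

Lemma lp_l (u : 'I_m) (R : {set T}) : lp (inl u |: R) = u |: lp R.
Proof. by apply/setP => i; rewrite !inE. Qed.
Lemma rp_l (u : 'I_m) (R : {set T}) : rp (inl u |: R) = rp R.
Proof. by apply/setP => i; rewrite !inE. Qed.
Lemma lp_r (u : 'I_m) (R : {set T}) : lp (inr u |: R) = lp R.
Proof. by apply/setP => i; rewrite !inE. Qed.
Lemma rp_r (u : 'I_m) (R : {set T}) : rp (inr u |: R) = u |: rp R.
Proof. by apply/setP => i; rewrite !inE. Qed.

Lemma cand (R : {set T}) (u v : 'I_m) : R \in bier K -> u != v ->
  u \notin lp R -> u \notin rp R -> v \notin lp R -> v \notin rp R ->
  exists x, [/\ x = inl u \/ x = inr v, x \notin R & x |: R \in bier K].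
Proof.
move=> HR Huv Hu1 Hu2 Hv1 Hv2.
move: (HR); rewrite in_bier => /and3P[H1 H2 H3].
case HuK: (u |: lp R \in K).
- exists (inl u); split; [by left| by move: Hu1; rewrite inE |].
  rewrite in_bier lp_l rp_l HuK H2 /=.
  apply/djP => z; rewrite in_setU1 => /orP[/eqP->|Hz]; first by rewrite (negbTE Hu2).
  by move/djP: H3 => /(_ z Hz).
- exists (inr v); split; [by right| by move: Hv2; rewrite inE |].
  rewrite in_bier lp_r rp_r H1 /=; apply/andP; split.
  + apply/negP => Hc; move/negP: HuK; apply.
    case: HK => _ Hc'; apply: Hc' Hc _.
    apply/subsetP => z; rewrite in_setU1 => /orP[/eqP->|Hz]; rewrite in_setC in_setU1.
    * by rewrite negb_or Huv Hu2.
    * rewrite negb_or; apply/andP; split.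
      - by apply/eqP => E; move: Hv1; rewrite -E Hz.
      - by apply/negP => Hz'; move/djP: H3 => /(_ z Hz Hz').
  + apply/djP => z Hz; rewrite in_setU1 => /orP[/eqP E|Hz'].
    * by move: Hv1; rewrite -E Hz.
    * by move/djP: H3 => /(_ z Hz Hz').
Qed.

Lemma ridge (R : {set T}) (b : T) : R \in bier K -> #|R|.+2 = m ->
  exists x, [/\ x \notin R, x != b & x |: R \in bier K].
Proof.
move=> HR Hc.
move: (HR); rewrite in_bier => /and3P[H1 H2 H3].
have HW : #|~: (lp R :|: rp R)| == 2.
  have := cardsC (lp R :|: rp R); rewrite cardsU (disjoint_setI0 H3) cards0 subn0 card_ord.
  move: Hc; rewrite card_lr => Hc E; apply/eqP; lia.
have [p [q [Hpq EW]]] := cards2P _ HW.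
have Hp : p \in ~: (lp R :|: rp R) by rewrite EW !inE eqxx.
have Hq : q \in ~: (lp R :|: rp R) by rewrite EW !inE eqxx orbT.
move: Hp Hq; rewrite !in_setC !in_setU !negb_or => /andP[Hp1 Hp2] /andP[Hq1 Hq2].
have [x1 [Ex1 Hx1 Fx1]] := cand HR Hpq Hp1 Hp2 Hq1 Hq2.
have Hqp : q != p by rewrite eq_sym.
have [x2 [Ex2 Hx2 Fx2]] := cand HR (Hqp) Hq1 Hq2 Hp1 Hp2.
case: (eqVneq x1 b) => Hb.
- exists x2; split => //; rewrite -Hb.
  by case: Ex1 => ->; case: Ex2 => ->; rewrite //; apply/eqP => -[E]; move: Hpq; rewrite E eqxx.
- by exists x1.
Qed.

Lemma key (y z : T) : y != z ->
  (forall G : {set T}, G \in bier K -> y \notin G -> z \notin G -> #|G|.+1 = m -> False) ->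
  forall A : {set T}, A \in bier K -> y \notin A -> z \notin A -> z |: A \in bier K.
Proof.
move=> Hyz H1 A HA Hy Hz; apply: contraT => /negP HzA; exfalso.
have [F [HAF HF HcF]] := purity HA.
have HzF : z \notin F.
  apply/negP => HzF; apply: HzA; apply: bier_sub HF _.
  by rewrite subUset sub1set HzF HAF.
have HyF : y \in F by apply/negPn/negP => HyF; exact: H1 F HF HyF HzF HcF.
have HR : F :\ y \in bier K := bier_sub HF (subD1set F y).
have HcR : #|F :\ y|.+2 = m by move: HcF; rewrite (cardsD1 y F) HyF.
have [x [HxR Hxy HxRF]] := ridge y HR HcR.
case: (eqVneq x z) => Exz.
- apply: HzA; apply: bier_sub HxRF _; rewrite -Exz; apply: setUS.
  apply/subsetP => w Hw; rewrite !inE (subsetP HAF w Hw) andbT.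
  by apply/eqP => E; move: Hy; rewrite -E Hw.
- apply: (H1 (x |: (F :\ y))) => //.
  + by rewrite !inE negb_or eq_sym Hxy eqxx.
  + by rewrite !inE negb_or eq_sym Exz (negbTE HzF) andbF.
  + by rewrite cardsU1 HxR.
Qed.
End B2.

Theorem mainTheorem9 (m : nat) (K : {set {set 'I_m}}) :
  3 <= m ->
  simplicial_complex K ->
  K != full_simplex 'I_m ->
  weak_suspension (bier K) ->
  ~ suspension (bier K) ->
  chromatic_number_is (bier K) m.
Proof.
move=> Hm HK HKf Hws Hns; split.
- exists (fun x : ('I_m + 'I_m)%type => match x with inl i => val i | inr i => val i end); split.
  + by move=> [i|i] _; exact: ltn_ord.
  + move=> [i|i] [j|j] Huv; rewrite in_bier => /and3P[_ _ H3]; apply/negP => /eqP /val_inj E.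
    * by move: Huv; rewrite E eqxx.
    * by move/djP: H3 => /(_ i); apply; rewrite !inE ?E eqxx ?orbT.
    * by move/djP: H3 => /(_ j); apply; rewrite !inE ?E eqxx ?orbT.
    * by move: Huv; rewrite E eqxx.
- move=> j [c [Hc1 Hc2]]; rewrite leqNgt; apply/negP => Hj.
  have face_pair : forall (F : {set ('I_m + 'I_m)%type}) x y, F \in bier K -> x \in F -> y \in F ->
      [set x; y] \in bier K.
    move=> F x y HF Hx Hy; apply: (bier_sub HK HF).
    by rewrite subUset !sub1set Hx Hy.
  have face_v : forall (F : {set ('I_m + 'I_m)%type}) x, F \in bier K -> x \in F ->
      x \in vertices (bier K).
    move=> F x HF Hx; rewrite /vertices inE; apply: (bier_sub HK HF).
    by rewrite sub1set.
  have col : forall x, x \in vertices (bier K) -> c x < m.-1.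
    move=> x Hx; have := Hc1 x Hx; lia.
  have inj : forall F, F \in bier K -> {in F &, injective c}.
    move=> F HF x y Hx Hy E; apply/eqP; apply: contraT => Hne; exfalso.
    by move: (Hc2 x y Hne (face_pair F x y HF Hx Hy)); rewrite E eqxx.
  have [a [b [Ha Hb Hab Hnab Hadj]]] := Hws.
  have Hca : c a = c b.
    move: (Ha); rewrite /vertices inE => Ha1.
    have [F [HaF HF HcF]] := purity Ha1.
    have HaF' : a \in F by rewrite (subsetP HaF) ?inE.
    have HbF : b \notin F.
      by apply/negP => HbF; move: Hnab; rewrite (face_pair F a b HF HaF' HbF).
    apply/eqP; apply: contraT => Hne; exfalso.
    have := ph (fun x Hx => col x (face_v F x HF Hx)) (inj F HF) (col b Hb).
    have H : (forall x, x \in F -> c x != c b).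
      move=> x Hx; case: (eqVneq x a) => [->//|Hxa].
      have Hxb : x != b by apply/eqP => E; move: HbF; rewrite -E Hx.
      have [_ Hbx] := Hadj x (face_v F x HF Hx) Hxa Hxb.
      by rewrite eq_sym; apply: Hc2 => //; rewrite eq_sym.
    move=> /(_ H); lia.
  have step1 : forall G : {set ('I_m + 'I_m)%type}, G \in bier K -> a \notin G -> b \notin G ->
      #|G|.+1 = m -> False.
    move=> G HG HaG HbG HcG.
    have := ph (fun x Hx => col x (face_v G x HG Hx)) (inj G HG) (col a Ha).
    have H : (forall x, x \in G -> c x != c a).
      move=> x Hx.
      have Hxa : x != a by apply/eqP => E; move: HaG; rewrite -E Hx.
      have Hxb : x != b by apply/eqP => E; move: HbG; rewrite -E Hx.
      have [Hax _] := Hadj x (face_v G x HG Hx) Hxa Hxb.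
      by rewrite eq_sym; apply: Hc2 => //; rewrite eq_sym.
    move=> /(_ H); lia.
  have Hba : b != a by rewrite eq_sym.
  have kab := key HK Hab step1.
  have kba := key HK Hba (fun G HG HbG HaG => step1 G HG HaG HbG).
  apply: Hns; exists a, b; split => // S; split.
  + move=> HS.
    have HnotAB : ~ (a \in S /\ b \in S).
      by move=> [HaS HbS]; move: Hnab; rewrite (face_pair S a b HS HaS HbS).
    case: (boolP (a \in S)) => HaS.
    * have HbS : b \notin S by apply/negP => HbS; exact: HnotAB.
      exists (S :\ a); last by right; left; rewrite setD1K.
      split; first exact: (bier_sub HK HS (subD1set S a)).
      by rewrite !inE eqxx (negbTE HbS) andbF.
    * case: (boolP (b \in S)) => HbS.
      - exists (S :\ b); last by right; right; rewrite setD1K.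
        split; first exact: (bier_sub HK HS (subD1set S b)).
        by rewrite !inE eqxx (negbTE HaS) andbF.
      - by exists S; [split | left].
  + move=> [A [HA [HaA HbA]] [->|[->|->]]] //.
    * exact: kba.
    * exact: kab.
Qed.
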